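(* Let $w \in S_n$ avoid the patterns $321$ and $231$, with Lehmer code $(L_1,\dots,L_n)$, and let $P$ be the bottom pipe dream of $w$. Let $i$ be any row of $P$ containing at least one crossing (i.e. $L_i \ge 1$), and consider the diagonal line going upward and rightward from the leftmost crossing of row $i$ (in square $(i,1)$), i.e. passing through the squares $(i-t, 1+t)$ for $t \ge 1$, $i-t \ge 1$. Then for every such $t$, neither the square $(i-t,1+t)$ on this line nor the square $(i-t,t)$ immediately to its left contains a crossing of $P$.
   Context: The Lehmer code of $w$ is $L_i = |\{j>i : w(j)<w(i)\}|$. The bottom pipe dream of $w \in S_n$ is the filling of the $n \times n$ grid (rows numbered $1,\dots,n$ from top to bottom, columns $1,\dots,n$ from left to right; square $(r,c)$ is in row $r$ and column $c$) in which square $(r,c)$ contains a crossing if $c \le L_r$ and a pair of elbows otherwise. Pattern containment: $w$ contains $p \in S_k$ if some subsequence $w(i_1),\dots,w(i_k)$, $i_1<\dots<i_k$, has the same relative order as $p$; otherwise $w$ avoids $p$. *)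

(* Defs.v *)
From mathcomp Require Import all_boot.
From mathcomp Require Import fingroup perm.
Set Implicit Arguments. Unset Strict Implicit. Unset Printing Implicit Defensive.

(* Permutations of S_n are {perm 'I_n}; position k (1-indexed in the paper)
   is the ordinal with value k-1, and values are likewise shifted by one
   (irrelevant for relative order). *)

Definition contains (n k : nat) (w : {perm 'I_n}) (p : {perm 'I_k}) : Prop :=
  exists f : 'I_k -> 'I_n,
    (forall a b : 'I_k, a < b -> f a < f b) /\
    (forall a b : 'I_k, (w (f a) < w (f b)) = (p a < p b)).

Definition avoids (n k : nat) (w : {perm 'I_n}) (p : {perm 'I_k}) : Prop :=
  ~ contains w p.

Definition pat321_fun (i : 'I_3) : 'I_3 := rev_ord i.
Lemma pat321_inj : injective pat321_fun.
Proof. exact: rev_ord_inj. Qed.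
Definition pat321 : {perm 'I_3} := perm pat321_inj.

(* 231 : 1 -> 2, 2 -> 3, 3 -> 1 ; 0-indexed: 0->1, 1->2, 2->0 *)
Definition pat231_fun (i : 'I_3) : 'I_3 := inord ((i.+1) %% 3).
Lemma pat231_inj : injective pat231_fun.
Proof.
move=> i j; rewrite /pat231_fun => /(congr1 val) /=.
rewrite (@inordK 2 (i.+1 %% 3)) ?ltn_mod // (@inordK 2 (j.+1 %% 3)) ?ltn_mod //.
by case: i j => [[|[|[|?]]] ?] [[|[|[|?]]] ?] //= _; apply/val_inj.
Qed.
Definition pat231 : {perm 'I_3} := perm pat231_inj.

(* Lehmer code, 1-indexed: L_i = #{j > i : w(j) < w(i)}, and 0 for i outside 1..n. *)
Definition lehmer (n : nat) (w : {perm 'I_n}) (i : nat) : nat :=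
  if i is i'.+1 then
    if i' < n =P true is ReflectT H then
      #|[set j : 'I_n | (i' < j) && (w j < w (Ordinal H))]|
    else 0
  else 0.

(* Square (r,c) (1-indexed) of the bottom pipe dream contains a crossing. *)
Definition bottom_cross (n : nat) (w : {perm 'I_n}) (r c : nat) : bool :=
  [&& 1 <= r <= n, 1 <= c <= n & c <= lehmer w r].

(* Main.v *)
Require Import Defs.
From mathcomp Require Import all_boot.
From mathcomp Require Import fingroup perm.
From mathcomp Require Import zify.
Set Implicit Arguments. Unset Strict Implicit.

Lemma mk3 n (w : {perm 'I_n}) (p : {perm 'I_3}) (a b c : 'I_n) :
  a < b -> b < c ->
  (forall x y : 'I_3, (w (nth a [:: a; b; c] x) < w (nth a [:: a; b; c] y)) = (p x < p y)) ->
  contains w p.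
Proof.
move=> ab bc H; exists (fun x => nth a [:: a; b; c] x); split => //.
by case=> [[|[|[|?]]] ?] [[|[|[|?]]] ?] //= _; lia.
Qed.

Lemma c321 n (w : {perm 'I_n}) (a b c : 'I_n) :
  a < b -> b < c -> w b < w a -> w c < w b -> contains w pat321.
Proof.
move=> ab bc h1 h2; apply: (mk3 ab bc).
by case=> [[|[|[|?]]] ?] [[|[|[|?]]] ?] //=; rewrite !permE /=; lia.
Qed.

Lemma c231 n (w : {perm 'I_n}) (a b c : 'I_n) :
  a < b -> b < c -> w a < w b -> w c < w a -> contains w pat231.
Proof.
move=> ab bc h1 h2; apply: (mk3 ab bc).
by case=> [[|[|[|?]]] ?] [[|[|[|?]]] ?] //=; rewrite !permE /pat231_fun /= ?inordK //=; lia.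
Qed.

Theorem lemma17 (n : nat) (w : {perm 'I_n}) :
  avoids w pat321 -> avoids w pat231 ->
  forall i : nat, 1 <= i <= n -> 1 <= lehmer w i ->
  forall t : nat, 1 <= t -> t < i ->
    ~~ bottom_cross w (i - t) (1 + t) /\ ~~ bottom_cross w (i - t) t.
Proof.
move=> A3 A2 i /andP[i1 iN] Li t t1 ti.
suff HL : lehmer w (i - t) < t.
  by rewrite /bottom_cross; split; apply/negP => /and3P[_ _]; lia.
case: i i1 iN Li ti => [//|i'] _ iN Li ti.
have -> : i'.+1 - t = (i' - t).+1 by lia.
move: Li; rewrite /lehmer.
case: eqP => [Hi|]; last by rewrite iN.
case: eqP => [Hr|]; last by move=> h; exfalso; apply: h; lia.
move=> Li.
set I := Ordinal Hi; set R := Ordinal Hr.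
have [j] : exists j, j \in [set j : 'I_n | (i' < j) && (w j < w I)].
  by apply/set0Pn; rewrite -card_gt0.
rewrite inE => /andP[ij wji].
have RI : R < I by rewrite /=; lia.
have wRI : w R < w I.
  rewrite ltnNge leq_eqVlt negb_or; apply/andP; split.
    by apply/eqP => /val_inj /perm_inj /(congr1 val) /=; lia.
  apply/negP => h; apply: A3; exact: (c321 RI ij h wji).
have wRJ : w R < w j.
  rewrite ltnNge leq_eqVlt negb_or; apply/andP; split.
    by apply/eqP => /val_inj /perm_inj /(congr1 val) /=; lia.
  apply/negP => h; apply: A2; exact: (c231 RI ij wRI h).
rewrite cardE -(size_map val).
have -> : t = (i' - (i' - t).+1).+1 by lia.
rewrite ltnS -(size_iota (i' - t).+1 (i' - (i' - t).+1)).
apply: uniq_leq_size; first by rewrite map_inj_uniq ?enum_uniq //; apply: val_inj.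
move=> x /mapP[k]; rewrite mem_enum inE => /andP[rk wk] ->.
rewrite mem_iota.
have kI : k < I.
  rewrite ltnNge leq_eqVlt; apply/negP => /orP[/eqP e|h].
    by move: wk; rewrite -(val_inj e) ltnNge ltnW.
  apply: A2; exact: (c231 RI h wRI wk).
move: rk kI; rewrite /R /I /= size_iota; lia.
Qed.
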